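(* Assume the Bateman–Horn Conjecture. Then $\limsup_{n\to\infty} j(a_n)=\infty$; that is, for every positive integer $k$ there are infinitely many $n$ with $j(a_n)\ge k$.
   Context: Let $A$ be the set of positive integers $a$ such that $a^2+1$ is prime, enumerated in increasing order as $A=\{a_1<a_2<\cdots\}$. For $n\ge 2$, $j(a_n)$ denotes the smallest index $i$ with $1\le i\le n-1$ such that $a_n-a_{n-i}\in A$. A finite set of polynomials $f_1,\dots,f_k\in\mathbb{Z}[x]$ satisfies the Bunyakovsky condition if there is no prime $p$ such that $\prod_i f_i(a)\equiv 0 \pmod p$ for all $a\in\mathbb{F}_p$. The Bateman–Horn Conjecture: if $f_1,\dots,f_k\in\mathbb{Z}[x]$ are distinct irreducible polynomials with positive leading coefficients satisfying the Bunyakovsky condition, then the number of positive integers $m\le x$ for which $f_1(m),\dots,f_k(m)$ are all prime is asymptotic to $C\,\frac{x}{\log^k x}$ for some constant $C>0$ (depending on $f_1,\dots,f_k$). *)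

(* Defs.v *)
From HB Require Import structures.
From mathcomp Require Import all_boot all_order all_algebra.
From mathcomp Require Import all_classical all_reals.
From mathcomp Require Import exp Rstruct.
Local Notation R := Rdefinitions.R.
Set Implicit Arguments. Unset Strict Implicit. Unset Printing Implicit Defensive.
Import Order.TTheory GRing.Theory Num.Theory.
Local Open Scope ring_scope.

Definition primez (z : int) : bool := (0 < z) && prime (absz z).

Definition irreducible_Zx (f : {poly int}) : Prop :=
  f != 0 /\ ~~ (f \is a GRing.unit) /\
  forall g h : {poly int}, f = g * h -> (g \is a GRing.unit) \/ (h \is a GRing.unit).

Definition bunyakovsky (fs : seq {poly int}) : Prop :=
  ~ exists p : nat, prime p /\
      forall a : nat, (a < p)%N ->
        (p%:Z %| \prod_(f <- fs) f.[a%:Z])%Z.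

Definition bh_count (fs : seq {poly int}) (x : R) : nat :=
  count (fun m : nat => all (fun f : {poly int} => primez f.[m%:Z]) fs)
        (iota 1 (Num.truncn x)).

(* The Bateman–Horn Conjecture. "count ~ C x / log^k x" is spelled out as:
   the ratio tends to 1 as the real x tends to +infinity. *)
Definition BatemanHorn : Prop :=
  forall fs : seq {poly int},
    uniq fs ->
    (forall f, f \in fs -> irreducible_Zx f) ->
    (forall f, f \in fs -> 0 < lead_coef f) ->
    bunyakovsky fs ->
    exists C : R, 0 < C /\
      forall eps : R, 0 < eps -> exists X : R, forall x : R, X <= x ->
        `| (bh_count fs x)%:R / (C * x / (ln x) ^+ (size fs)) - 1 | < eps.

Definition inA (a : nat) : bool := (0 < a)%N && prime (a ^ 2 + 1).

(* nthA n a : a is a_n, the n-th element (1-indexed) of A in increasing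
   order, i.e. a \in A and exactly n-1 elements of A are smaller than a. *)
Definition nthA (n a : nat) : Prop :=
  (0 < n)%N /\ inA a /\ count inA (iota 0 a) = n.-1.

(* jA n j : a_n exists, n >= 2, and j(a_n) = j, i.e. j is the smallest
   index i with 1 <= i <= n-1 such that a_n - a_(n-i) \in A. *)
Definition jA (n j : nat) : Prop :=
  (2 <= n)%N /\
  exists an : nat, nthA n an /\
    (1 <= j <= n.-1)%N /\
    (exists b, nthA (n - j) b /\ inA (an - b)) /\
    (forall i, (1 <= i < j)%N -> forall b, nthA (n - i) b -> ~~ inA (an - b)).

(* Main.v *)
Require Import Defs.
From HB Require Import structures.
From mathcomp Require Import all_boot all_order all_algebra.
From mathcomp Require Import all_classical all_reals.
From mathcomp Require Import sequences exp Rstruct.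
From mathcomp Require Import ring lra zify.
From Stdlib Require Import Lia.
Set Implicit Arguments. Unset Strict Implicit. Unset Printing Implicit Defensive.
Import Order.TTheory GRing.Theory Num.Theory.
Local Open Scope ring_scope.
Local Notation R := Rdefinitions.R.

Definition qp (u v : int) : {poly int} := Poly [:: v ^+ 2 + 1; - (2 * u * v); u ^+ 2].

Lemma qp_eval u v x : (qp u v).[x] = (u * x - v) ^+ 2 + 1.
Proof. rewrite /qp horner_Poly /=. ring. Qed.

Lemma qp_size u v : u != 0 -> size (qp u v) = 3%N.
Proof. move=> hu; rewrite /qp (PolyK (c:=0)) //= sqrf_eq0 //. Qed.

Lemma qp_coef u v i : (qp u v)`_i = [:: v ^+ 2 + 1; - (2 * u * v); u ^+ 2]`_i.
Proof. by rewrite coef_Poly. Qed.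

Lemma qp_lead u v : u != 0 -> lead_coef (qp u v) = u ^+ 2.
Proof. by move=> hu; rewrite /lead_coef qp_size // qp_coef. Qed.

Lemma poly_unit_const (c : int) : (c == 1) || (c == -1) -> c%:P \is a GRing.unit.
Proof.
move=> hc; rewrite poly_unitE size_polyC coefC /=.
have -> : c != 0 by case/orP: hc => /eqP ->.
by [].
Qed.

Lemma const_fac (c : int) (h : {poly int}) x : (c%:P * h).[x] = c * h.[x].
Proof. by rewrite hornerM hornerC. Qed.

Lemma qp_irr u v : u != 0 ->
  ~ (exists p : nat, prime p /\ forall a : nat, (a < p)%N -> (p%:Z %| (qp u v).[a%:Z])%Z) ->
  irreducible_Zx (qp u v).
Proof.
move=> hu hB.
have s3 := qp_size v hu.
split; first by rewrite -size_poly_eq0 s3.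
split; first by rewrite poly_unitE s3.
move=> g h E.
have gn0 : g != 0 by apply/eqP => g0; move: s3; rewrite E g0 mul0r size_poly0.
have hn0 : h != 0 by apply/eqP => h0; move: s3; rewrite E h0 mulr0 size_poly0.
have sz := size_mul gn0 hn0. rewrite -E s3 in sz.
have sg0 : (0 < size g)%N by rewrite size_poly_gt0.
have sh0 : (0 < size h)%N by rewrite size_poly_gt0.
have constcase : forall (g h : {poly int}), qp u v = g * h -> size g = 1%N ->
    g \is a GRing.unit.
  move=> g1 h1 E1 s1.
  have Eg := size1_polyC (eq_leq s1).
  set c := g1`_0 in Eg.
  have cn0 : c != 0 by apply/eqP => c0; move: s1; rewrite Eg c0 size_polyC eqxx.
  have [cu|cnu] := boolP ((c == 1) || (c == -1)).
    by rewrite Eg; apply: poly_unit_const.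
  exfalso; apply: hB.
  have c1 : (1 < `|c|)%N.
    move: cn0 cnu; rewrite negb_or => /eqP cn0 /andP[/eqP cn1 /eqP cn2]; lia.
  exists (pdiv `|c|); split; first exact: pdiv_prime.
  move=> a _; rewrite E1 Eg const_fac; apply: dvdz_mulr.
  by rewrite dvdzE /= pdiv_dvd.
have [s1|s1] := eqVneq (size g) 1%N; first by left; apply: constcase (E) s1.
have [t1|t1] := eqVneq (size h) 1%N.
  by right; apply: (constcase h g _ t1); rewrite E mulrC.
exfalso.
have sz' : (size g + size h)%N = 4%N.
  by rewrite -[(size g + size h)%N]prednK -?sz // addn_gt0 sg0.
move/eqP: s1 => s1; move/eqP: t1 => t1.
have sg2 : size g = 2%N by move: sz' s1 t1 sg0 sh0; lia.
have sh2 : size h = 2%N by move: sz' s1 t1 sg0 sh0; lia.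
have g2 : g`_2 = 0 by rewrite nth_default // sg2.
have h2 : h`_2 = 0 by rewrite nth_default // sh2.
have c0 := qp_coef u v 0. have c1 := qp_coef u v 1. have c2 := qp_coef u v 2.
rewrite E coefM big_ord_recr big_ord0 /= add0r in c0.
rewrite E coefM !big_ord_recr big_ord0 /= add0r in c1.
rewrite E coefM !big_ord_recr big_ord0 /= add0r g2 h2 mul0r mulr0 add0r addr0 in c2.
simpl in c0, c1, c2.
have key : (g`_0 * h`_1 + g`_1 * h`_0) ^+ 2 - 4 * (g`_1 * h`_1) * (g`_0 * h`_0)
     = (g`_0 * h`_1 - g`_1 * h`_0) ^+ 2 by ring.
rewrite c0 c1 c2 in key.
have : 0 <= (g`_0 * h`_1 - g`_1 * h`_0) ^+ 2 by apply: sqr_ge0.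
rewrite -key.
have hu2 : 0 < u ^+ 2 by rewrite lt0r sqr_ge0 sqrf_eq0 hu.
have -> : (- (2 * u * v)) ^+ 2 - 4 * u ^+ 2 * (v ^+ 2 + 1) = - 4 * u ^+ 2 by ring.
lra.
Qed.


Lemma prime_dvd_prod (p : nat) (I : Type) (s : seq I) (F : I -> int) :
  prime p -> (p%:Z %| \prod_(i <- s) F i)%Z -> exists2 i, List.In i s & (p%:Z %| F i)%Z.
Proof.
move=> pp; elim: s => [|i s IH].
  rewrite big_nil dvdz1 /= => /eqP p1; by rewrite p1 in pp.
rewrite big_cons dvdzE abszM Euclid_dvdM // => /orP[h|h].
  by exists i; [left|].
by case: IH => // j js hj; exists j; [right|].
Qed.

Lemma poly_dvd_diff (P : {poly int}) (x y d : int) :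
  (d %| x - y)%Z -> (d %| P.[x] - P.[y])%Z.
Proof.
move=> /dvdzP [q hq]; elim/poly_ind: P => [|P c IH].
  by rewrite !horner0 subrr dvdz0.
rewrite !hornerMXaddC; case/dvdzP: IH => r hr.
apply/dvdzP; exists (r * x + P.[y] * q).
have -> : P.[x] * x + c - (P.[y] * y + c) = (P.[x] - P.[y]) * x + P.[y] * (x - y) by ring.
rewrite hr hq; ring.
Qed.

Lemma dvd_prod_mem (p : int) (s : seq {poly int}) f (a : int) :
  f \in s -> (p %| f.[a])%Z -> (p %| \prod_(g <- s) g.[a])%Z.
Proof.
move=> fs hf; rewrite (big_rem f) //=; exact: dvdz_mulr.
Qed.

Lemma buny_mem (fs : seq {poly int}) f : bunyakovsky fs -> f \in fs ->
  ~ (exists p : nat, prime p /\ forall a : nat, (a < p)%N -> (p%:Z %| f.[a%:Z])%Z).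
Proof.
move=> hb fs_f [p [pp hp]]; apply: hb; exists p; split => // a ha.
exact: (dvd_prod_mem fs_f (hp a ha)).
Qed.

Lemma buny_fail_all (fs : seq {poly int}) (p : nat) :
  (0 < p)%N -> (forall a : nat, (a < p)%N -> (p%:Z %| \prod_(f <- fs) f.[a%:Z])%Z) ->
  forall m : nat, (p%:Z %| \prod_(f <- fs) f.[m%:Z])%Z.
Proof.
move=> p0 h m.
have hm := h (m %% p)%N (ltn_pmod m p0).
rewrite -!horner_prod in hm *.
have hd : (p%:Z %| m%:Z - (m %% p)%N%:Z)%Z.
  apply/dvdzP; exists (m %/ p)%N%:Z.
  by rewrite {1}(divn_eq m p) PoszD PoszM addrK.
have := poly_dvd_diff (\prod_(f <- fs) f) hd.
case/dvdzP => q hq; case/dvdzP: hm => r hr; apply/dvdzP; exists (q + r).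
rewrite mulrDl -hq -hr; ring.
Qed.


Lemma size_map_le (R S : nzRingType) (f : R -> S) (P : {poly R}) : (size (map_poly f P) <= size P)%N.
Proof. by rewrite map_polyE (leq_trans (size_Poly _)) // size_map. Qed.

Lemma root_count (p : nat) (P : {poly int}) : prime p ->
  map_poly (intr : int -> 'F_p) P != 0 ->
  (forall a : nat, (a < p)%N -> (p%:Z %| P.[a%:Z])%Z) -> (p < size P)%N.
Proof.
move=> pp nz h.
set rs := [seq (a%:R : 'F_p) | a <- iota 0 p].
have ar : all (root (map_poly (intr : int -> 'F_p) P)) rs.
  apply/allP => x /mapP [a]; rewrite mem_iota => /andP[_ ha] ->.
  rewrite /root -[a%:R]/((a%:Z)%:~R : 'F_p) horner_map /=.
  case/dvdzP: (h a ha) => q ->.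
  by rewrite rmorphM /= -[(p%:Z)%:~R]/(p%:R : 'F_p) pchar_Fp_0 // mulr0.
have ur : uniq rs.
  rewrite map_inj_in_uniq ?iota_uniq // => a b; rewrite !mem_iota => /andP[_ ha] /andP[_ hb].
  move=> E; have := congr1 (fun x : 'F_p => nat_of_ord x) E.
  rewrite /= !val_Fp_nat // !modn_small //.
have := max_poly_roots nz ar ur.
rewrite size_map size_iota => hlt.
exact: (leq_trans hlt (size_map_le _ _)).
Qed.

Definition Fs (Q : nat) (es : seq nat) := [seq qp Q%:Z (Q%:Z * e%:Z) | e <- es].

Lemma qp_neq0 u v : u != 0 -> qp u v != 0.
Proof. by move=> hu; rewrite -size_poly_eq0 qp_size. Qed.

Lemma size_prodF (Q : nat) es : (0 < Q)%N ->
  size (\prod_(f <- Fs Q es) f) = (2 * size es).+1.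
Proof.
move=> Q0; have Qn0 : Q%:Z != 0 by rewrite lt0r_neq0 // ltz_nat.
elim: es => [|e es IH]; first by rewrite big_nil size_poly1.
rewrite /Fs map_cons big_cons size_mul ?qp_neq0 //; last first.
  by rewrite -size_poly_eq0 -/(Fs Q es) IH.
by rewrite -/(Fs Q es) IH qp_size //= mulnS.
Qed.

Lemma buny_F (Q : nat) (es : seq nat) : (0 < Q)%N ->
  (forall p, prime p -> (p <= 2 * size es)%N -> (p %| Q)%N) ->
  bunyakovsky (Fs Q es).
Proof.
move=> Q0 hQ [p [pp hp]].
have Qn0 : Q%:Z != 0 by rewrite lt0r_neq0 // ltz_nat.
have [pQ|pQ] := boolP (p %| Q)%N.
  have := hp 0%N (prime_gt0 pp); rewrite big_map.
  case/prime_dvd_prod => // e _; rewrite qp_eval => /dvdzP [r hr].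
  have : (p%:Z %| Q%:Z)%Z by rewrite dvdzE.
  case/dvdzP => w hw.
  have : (p%:Z %| 1)%Z.
    apply/dvdzP; exists (r - w ^+ 2 * p%:Z * e%:Z ^+ 2).
    transitivity ((Q%:Z * 0 - Q%:Z * e%:Z) ^+ 2 + 1 - (Q%:Z * 0 - Q%:Z * e%:Z) ^+ 2); first by ring.
    rewrite hr hw; ring.
  rewrite dvdz1 /= => /eqP p1; by rewrite p1 in pp.
have hlt : (2 * size es < p)%N.
  by rewrite ltnNge; apply: contra pQ; apply: hQ.
have := @root_count p (\prod_(f <- Fs Q es) f) pp.
rewrite size_prodF // ltnS leqNgt hlt => H.
suff : false by [].
apply: H; last first.
  by move=> a ha; rewrite horner_prod; apply: hp.
rewrite rmorph_prod /= prodf_seq_neq0; apply/allP => f /mapP [e _ ->] /=.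
apply/eqP => h0.
have := congr1 (fun P => P.[(e%:Z)%:~R]) h0; rewrite /= horner_map qp_eval horner0.
have -> : (Q%:Z * e%:Z - Q%:Z * e%:Z) ^+ 2 + 1 = 1 by ring.
by rewrite rmorph1 => /eqP; rewrite oner_eq0.
Qed.


Lemma growth_real (s : nat) (C Cb Kb : R) : 0 < C -> 0 <= Cb ->
  exists T : R, 1 <= T /\ forall t : R, T <= t ->
    Cb * expR t / t ^+ s.+1 + Kb < C / 2 * expR t / t ^+ s.
Proof.
move=> C0 Cb0.
set F : R := (s.+1)`!%:R.
have F0 : 0 < F by rewrite ltr0n fact_gt0.
exists (Num.max 1 (Num.max (4 * Cb / C) (F * (4 * `|Kb| + C) / C))).
split; first by rewrite le_max lexx.
move=> t; rewrite !ge_max => /and3P [t1 tCb tK].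
have t0 : 0 < t by lra.
set P := t ^+ s.
have P0 : 0 < P by rewrite exprn_gt0.
set y := expR t.
have hy : t ^+ s.+1 / F <= y.
  have := expR_ge1Dxn s (ltW t0); rewrite -/y; have : 0 <= t ^+ s.+1 / F.
    by rewrite divr_ge0 // ?exprn_ge0 ?ltW.
  lra.
rewrite exprS -/P in hy *.
set w := y / (t * P).
have w0 : 0 < w by rewrite divr_gt0 ?mulr_gt0 // expR_gt0.
have e1 : C / 2 * y / P = C / 2 * t * w.
  by rewrite /w; field; apply/andP; split; rewrite lt0r_neq0.
have e2 : Cb * y / (t * P) = Cb * w by rewrite /w mulrA.
rewrite e1 e2.
have hw : t <= t * w * F.
  have -> : t * (y / (t * P)) * F = y * F / P.
    by field; apply/andP; split; rewrite lt0r_neq0.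
  rewrite ler_pdivlMr // -ler_pdivrMr //.
have hCb : 4 * Cb <= C * t by rewrite [C * t]mulrC -ler_pdivrMr //.
have hK : F * (4 * `|Kb| + C) <= C * t by rewrite [C * t]mulrC -ler_pdivrMr //.
have hCw : 4 * Cb * w <= C * t * w by rewrite ler_pM2r.
have hK2 : F * (4 * `|Kb| + C) <= C * t * w * F.
  apply: (le_trans hK); move: hw; rewrite -(ler_pM2l C0) => h.
  by rewrite !mulrA in h *.
have hK3 : 4 * `|Kb| + C <= C * t * w.
  by move: hK2; rewrite mulrC ler_pM2r.
have := ler_norm Kb.
lra.
Qed.


Definition goodF (fs : seq {poly int}) (m : nat) : bool :=
  all (fun f : {poly int} => primez f.[m%:Z]) fs.

Lemma count_split {T : Type} (a b c : pred T) s :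
  (forall x, a x -> b x || c x) -> (count a s <= count b s + count c s)%N.
Proof.
move=> h; elim: s => //= x s IH.
have := h x; case: (a x); case: (b x); case: (c x) => //= H; try lia.
Qed.

Lemma count_small M a n : (count (fun m => m < M)%N (iota a n) <= M)%N.
Proof.
rewrite -size_filter.
apply: (@leq_trans (size (iota 0 M))); last by rewrite size_iota.
apply: uniq_leq_size; first by rewrite filter_uniq // iota_uniq.
by move=> x; rewrite mem_filter mem_iota => /andP[hx _]; rewrite mem_iota add0n hx.
Qed.

Lemma primez_dvd (p : nat) (z : int) : prime p -> primez z -> (p%:Z %| z)%Z -> z = p%:Z.
Proof.
move=> pp /andP[z0 pz]; rewrite dvdzE /= dvdn_prime2 // => /eqP ->.
by rewrite gez0_abs // ltW.
Qed.

Lemma growth_all (s : seq {poly int}) :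
  (forall f, f \in s -> forall B : int, exists M0 : nat, forall m : nat, (M0 <= m)%N -> B < f.[m%:Z]) ->
  forall B : int, exists M0 : nat, forall m : nat, (M0 <= m)%N -> forall f, f \in s -> B < f.[m%:Z].
Proof.
elim: s => [|f s IH] h B; first by exists 0%N.
have [M1 h1] := h f (mem_head _ _) B.
have [M2 h2] : exists M0 : nat, forall m : nat, (M0 <= m)%N -> forall f, f \in s -> B < f.[m%:Z].
  by apply: IH => g gs; apply: h; rewrite in_cons gs orbT.
exists (maxn M1 M2) => m; rewrite geq_max => /andP[m1 m2] g; rewrite in_cons => /orP[/eqP ->|gs].
  exact: h1.
exact: h2.
Qed.

Lemma bh_half (fs : seq {poly int}) (C x : R) :
  0 < C -> 1 < x ->
  `| (bh_count fs x)%:R / (C * x / (ln x) ^+ (size fs)) - 1 | < 2^-1 ->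
  C / 2 * x / (ln x) ^+ (size fs) < (bh_count fs x)%:R /\
  (bh_count fs x)%:R < 3 / 2 * C * x / (ln x) ^+ (size fs).
Proof.
move=> C0 x1 h.
have L0 : 0 < ln x by apply: ln_gt0.
have D0 : 0 < C * x / (ln x) ^+ (size fs).
  by rewrite divr_gt0 ?exprn_gt0 // mulr_gt0 // (lt_trans ltr01).
set D := C * x / (ln x) ^+ (size fs) in D0 h.
set c := (bh_count fs x)%:R in h *.
have h1 := ler_norm (c / D - 1).
have h2 : - (c / D - 1) <= `|c / D - 1| by rewrite -normrN ler_norm.
have e : c = c / D * D by rewrite divfK // lt0r_neq0.
have -> : C / 2 * x / ln x ^+ size fs = 2^-1 * D by rewrite /D; ring.
have -> : 3 / 2 * C * x / ln x ^+ size fs = 3 / 2 * D by rewrite /D; ring.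
rewrite e; split.
  by rewrite ltr_pM2r //; lra.
by rewrite ltr_pM2r //; lra.
Qed.

Lemma prime_dvd_prodE (p : nat) (I : eqType) (s : seq I) (F : I -> int) :
  prime p -> (p%:Z %| \prod_(i <- s) F i)%Z -> exists2 i, i \in s & (p%:Z %| F i)%Z.
Proof.
move=> pp; elim: s => [|i s IH].
  rewrite big_nil dvdz1 /= => /eqP p1; by rewrite p1 in pp.
rewrite big_cons dvdzE abszM Euclid_dvdM // => /orP[h|h].
  by exists i; rewrite ?mem_head.
by case: IH => // j js hj; exists j; rewrite // in_cons js orbT.
Qed.

Definition BHok (fs : seq {poly int}) : Prop := uniq fs /\ (forall f, f \in fs -> irreducible_Zx f) /\
  (forall f, f \in fs -> 0 < lead_coef f) /\ bunyakovsky fs.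

Definition grows (f : {poly int}) : Prop :=
  forall B : int, exists M0 : nat, forall m : nat, (M0 <= m)%N -> B < f.[m%:Z].

Definition gok fs g : Prop := g \notin fs /\ 0 < lead_coef g /\
  (bunyakovsky (rcons fs g) -> irreducible_Zx g) /\ grows g.

Lemma g_bound fs g : BatemanHorn -> BHok fs -> (forall f, f \in fs -> grows f) -> gok fs g ->
  exists Cg : R, exists Kg : nat, exists Xg : R, 0 <= Cg /\ forall x, Xg <= x ->
   (count (fun m => goodF fs m && primez g.[m%:Z]) (iota 1 (Num.truncn x)))%:R
      <= Cg * x / ln x ^+ (size fs).+1 + Kg%:R.
Proof.
move=> BH [u [irr [lc bu]]] grf [gn [lg [ig grg]]].
have [bg|nbg] := pselect (bunyakovsky (rcons fs g)).
  have H1 : uniq (rcons fs g) by rewrite rcons_uniq gn.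
  have H2 : forall f, f \in rcons fs g -> irreducible_Zx f.
    by move=> f; rewrite mem_rcons in_cons => /orP[/eqP ->|/irr //]; apply: ig.
  have H3 : forall f, f \in rcons fs g -> 0 < lead_coef f.
    by move=> f; rewrite mem_rcons in_cons => /orP[/eqP ->|/lc].
  have [C [C0 HC]] := BH (rcons fs g) H1 H2 H3 bg.
  have [X HX] := HC 2^-1 (ltac:(by rewrite invr_gt0 ltr0Sn)).
  exists (3 / 2 * C), 0%N, (Num.max X 2); split; first by lra.
  move=> x; rewrite ge_max => /andP[xX x2].
  have x1 : 1 < x by apply: lt_le_trans x2; rewrite ltr1n.
  have [_ h] := bh_half C0 x1 (HX x xX).
  rewrite addr0 -(size_rcons fs g); apply: ltW; move: h; rewrite /bh_count.
  congr (_ < _); congr (_%:R); apply: eq_count => m.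
  by rewrite /goodF all_rcons andbC.
have [p [pp hp]] : exists p : nat, prime p /\ forall a : nat, (a < p)%N ->
    (p%:Z %| \prod_(f <- rcons fs g) f.[a%:Z])%Z.
  case: (pselect (exists p : nat, prime p /\ forall a : nat, (a < p)%N ->
    (p%:Z %| \prod_(f <- rcons fs g) f.[a%:Z])%Z)) => [h|h]; first exact: h.
  by exfalso; exact: (nbg h).
have hall := buny_fail_all (prime_gt0 pp) hp.
have [M0 HM] : exists M0 : nat, forall m : nat, (M0 <= m)%N -> forall f, f \in rcons fs g -> p%:Z < f.[m%:Z].
  apply: growth_all => f; rewrite mem_rcons in_cons => /orP[/eqP ->|/grf] //.
exists 0, M0, 0; split => // x _.
rewrite mul0r mul0r add0r ler_nat.
apply: (leq_trans _ (count_small M0 1 (Num.truncn x))).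
apply: sub_count => m /andP[gm pg]; rewrite ltnNge; apply/negP => Mm.
have [f fin' hf] := prime_dvd_prodE pp (hall m).
have pf : primez f.[m%:Z].
  move: fin'; rewrite mem_rcons in_cons => /orP[/eqP -> //|ff].
  by move/allP: gm => /(_ f ff).
have := primez_dvd pp pf hf; have := HM m Mm f fin'.
by move=> h1 h2; rewrite h2 ltxx in h1.
Qed.


Lemma bad_bound fs gs : BatemanHorn -> BHok fs -> (forall f, f \in fs -> grows f) ->
  (forall g, g \in gs -> gok fs g) ->
  exists Cb : R, exists Kb : nat, exists Xb : R, 0 <= Cb /\ forall x, Xb <= x ->
   (count (fun m => goodF fs m && has (fun g => primez g.[m%:Z]) gs) (iota 1 (Num.truncn x)))%:R
      <= Cb * x / ln x ^+ (size fs).+1 + Kb%:R.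
Proof.
move=> BH hfs grf; elim: gs => [|g gs IH] hg.
  exists 0, 0%N, 0; split => // x _.
  rewrite (eq_count (a2 := pred0)); first by rewrite count_pred0 !mul0r add0r.
  by move=> m /=; rewrite andbF.
have [Cg [Kg [Xg [Cg0 HG]]]] := g_bound BH hfs grf (hg g (mem_head _ _)).
have [|Cb [Kb [Xb [Cb0 HB]]]] := IH.
  by move=> h hh; apply: hg; rewrite in_cons hh orbT.
exists (Cg + Cb), (Kg + Kb)%N, (Num.max Xg Xb); split; first by rewrite addr_ge0.
move=> x; rewrite ge_max => /andP[xg xb].
apply: le_trans; last first.
  have := lerD (HG x xg) (HB x xb).
  have -> : (Cg + Cb) * x / ln x ^+ (size fs).+1 + (Kg + Kb)%N%:R =
     Cg * x / ln x ^+ (size fs).+1 + Kg%:R + (Cb * x / ln x ^+ (size fs).+1 + Kb%:R).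
    by rewrite natrD; ring.
  by move=> h; exact: h.
rewrite -natrD ler_nat; apply: count_split => m /=.
by case/andP => -> /orP[->|->]; rewrite ?orbT.
Qed.

Lemma main_exists fs gs : BatemanHorn -> BHok fs -> (forall f, f \in fs -> grows f) ->
  (forall g, g \in gs -> gok fs g) ->
  forall M : nat, exists m : nat, (M <= m)%N /\ goodF fs m /\ all (fun g => ~~ primez g.[m%:Z]) gs.
Proof.
move=> BH hfs grf hg M.
have [Cb [Kb [Xb [Cb0 HB]]]] := bad_bound BH hfs grf hg.
case: (hfs) => u [irr [lc bu]].
have [C [C0 HC]] := BH fs u irr lc bu.
have [X HX] := HC 2^-1 (ltac:(by rewrite invr_gt0 ltr0Sn)).
have [T [T1 HT]] := @growth_real (size fs) C Cb (Kb + M)%N%:R C0 Cb0.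
set t := Num.max T (Num.max X Xb).
have tT : T <= t by rewrite le_max lexx.
have tX : X <= t by rewrite /t !le_max lexx orbT.
have tXb : Xb <= t by rewrite /t !le_max lexx !orbT.
set x := expR t.
have xt : t < x by have := expR_ge1Dx t; rewrite -/x; lra.
have t0 : 0 < t by lra.
have x1 : 1 < x by rewrite /x expR_gt1.
have lnx : ln x = t by rewrite /x expRK.
have [h1 _] := bh_half C0 x1 (HX x (ltW (le_lt_trans tX xt))).
have h2 := HB x (ltW (le_lt_trans tXb xt)).
have h3 := HT t tT.
rewrite lnx in h1 h2; rewrite -/x in h3.
set cnt := bh_count fs x in h1.
set bad := count _ _ in h2.
have key : (bad + M < cnt)%N.
  rewrite -(ltr_nat R) natrD.
  have : (Kb + M)%N%:R = Kb%:R + M%:R :> R by rewrite natrD.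
  lra.
set good3 := fun m => goodF fs m && ~~ has (fun g => primez g.[m%:Z]) gs && (M <= m)%N.
have hsplit : (cnt <= bad + (count good3 (iota 1 (Num.truncn x)) + M))%N.
  apply: (leq_trans _ (leq_add (leqnn bad) (leq_add (leqnn _) (count_small M 1 (Num.truncn x))))).
  rewrite /cnt /bh_count /bad.
  apply: (leq_trans (count_split (b := fun m => goodF fs m && has (fun g => primez g.[m%:Z]) gs)
     (c := predU good3 (fun m => m < M)%N) _ _)).
    move=> m /= gm; rewrite /good3; move: gm; rewrite -/(goodF fs m) => gm; rewrite gm /=.
    by case: (has _ _) => //=; case: (leqP M m).
  apply: leq_add; first by []. by apply: count_split => m.
have : (0 < count good3 (iota 1 (Num.truncn x)))%N.
  rewrite lt0n; apply/negP => /eqP c0; rewrite c0 add0n in hsplit.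
  by move: key; rewrite ltnNge hsplit.
rewrite -has_count => /hasP [m _] /andP[/andP[gm nh] Mm].
exists m; split => //; split => //.
by rewrite all_predC.
Qed.


Lemma qp_at0 u v : (qp u v).[0] = v ^+ 2 + 1.
Proof. by rewrite qp_eval; ring. Qed.

Lemma qp_inj_nat (Q a b : nat) : qp Q%:Z a%:Z = qp Q%:Z b%:Z -> a = b.
Proof.
move=> h; have := congr1 (fun P => P.[0]) h; rewrite /= !qp_at0 => /addIr.
move/eqP; by rewrite eqrXn2 // => /eqP [] .
Qed.

Lemma qp_grows (u : nat) (v : int) : (0 < u)%N -> grows (qp u%:Z v).
Proof.
move=> u0 B; exists (`|v| + `|B| + 1)%N => m hm; rewrite qp_eval.
set z := u%:Z * m%:Z - v.
have hz : `|B|%:Z + 1 <= z.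
  rewrite /z; have : (`|v| + `|B| + 1 <= m)%N by [].
  have hv : v <= `|v|%:Z by rewrite abszE ler_norm.
  have hu : m%:Z <= u%:Z * m%:Z by rewrite ler_peMl // ?ler1n // ler0n.
  rewrite -(ler_nat int) !natrD; lia.
have hB : B <= `|B|%:Z by rewrite abszE ler_norm.
have : z <= z ^+ 2 by rewrite expr2 ler_peMl //; lia.
lia.
Qed.

Lemma Fs_mem Q es f : f \in Fs Q es -> exists2 e, e \in es & f = qp Q%:Z (Q * e)%N%:Z.
Proof. by case/mapP => e ee ->; exists e => //; rewrite PoszM. Qed.

Lemma Fs_BHok Q es : (0 < Q)%N -> uniq es ->
  (forall p, prime p -> (p <= 2 * size es)%N -> (p %| Q)%N) -> BHok (Fs Q es).
Proof.
move=> Q0 ues hQ.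
have Qn0 : Q%:Z != 0 by rewrite lt0r_neq0 // ltz_nat.
have bF := buny_F Q0 hQ.
split.
  rewrite map_inj_uniq // => e1 e2; rewrite -!PoszM => /qp_inj_nat /eqP.
  by rewrite eqn_pmul2l // => /eqP.
split.
  move=> f hf; have [e _ E] := Fs_mem hf; rewrite E; apply: qp_irr => //.
  rewrite -E; exact: buny_mem bF hf.
split; last by [].
move=> f /Fs_mem [e _ ->]; rewrite qp_lead // exprn_gt0 // ltz_nat.
Qed.

Lemma Fs_grows Q es : (0 < Q)%N -> forall f, f \in Fs Q es -> grows f.
Proof. by move=> Q0 f /Fs_mem [e _ ->]; apply: qp_grows. Qed.

Lemma gok_qp Q es (t : nat) : (0 < Q)%N -> (forall e, e \in es -> t != (Q * e)%N) ->
  gok (Fs Q es) (qp Q%:Z t%:Z).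
Proof.
move=> Q0 ht.
have Qn0 : Q%:Z != 0 by rewrite lt0r_neq0 // ltz_nat.
split.
  apply/negP => /Fs_mem [e ee] /qp_inj_nat et.
  by move: (ht e ee); rewrite et eqxx.
split; first by rewrite qp_lead // exprn_gt0 // ltz_nat.
split; last by apply: qp_grows.
move=> bu; apply: qp_irr => //; apply: buny_mem bu _.
by rewrite mem_rcons mem_head.
Qed.

Lemma inA_eval (Q m t : nat) : (t < Q * m)%N ->
  inA (Q * m - t) = primez (qp Q%:Z t%:Z).[m%:Z].
Proof.
move=> ht; rewrite qp_eval /inA subn_gt0 ht /=.
have -> : (Q%:Z * m%:Z - t%:Z) ^+ 2 + 1 = ((Q * m - t) ^ 2 + 1)%N%:Z.
  by rewrite -PoszM (subzn (ltnW ht)) expr2 -PoszM PoszD mulnn.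
by rewrite /primez /= addn1.
Qed.


Lemma count_iota_split (P : pred nat) x y : (x <= y)%N ->
  count P (iota 0 y) = (count P (iota 0 x) + count P (iota x (y - x)))%N.
Proof. by move=> xy; rewrite -count_cat -iotaD subnKC. Qed.

Lemma count_step x y : inA x -> (forall z, (x < z < y)%N -> ~~ inA z) -> (x < y)%N ->
  count inA (iota 0 y) = (count inA (iota 0 x)).+1.
Proof.
move=> ix hz xy; rewrite (count_iota_split _ (ltnW xy)) -subnSK //= ix.
rewrite (@eq_in_count _ inA pred0 (iota x.+1 (y - x.+1))) ?count_pred0 ?addn0 ?addn1 // => z.
rewrite mem_iota subnKC // => /andP[h1 h2] /=; apply/negbTE/hz.
by rewrite h1.
Qed.

Lemma count_lt x y : inA x -> (x < y)%N -> (count inA (iota 0 x) < count inA (iota 0 y))%N.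
Proof.
move=> ix xy; rewrite (count_iota_split _ (ltnW xy)) -subnSK //= ix.
by rewrite -{1}[count inA (iota 0 x)]addn0 ltn_add2l.
Qed.

Lemma count_mono x y : (x <= y)%N -> (count inA (iota 0 x) <= count inA (iota 0 y))%N.
Proof. by move=> xy; rewrite (count_iota_split _ xy) leq_addr. Qed.

Lemma nthA_uniq r b b' : nthA r b -> nthA r b' -> b = b'.
Proof.
move=> [_ [ib cb]] [_ [ib' cb']].
have [lt|gt|//] := ltngtP b b'.
  by have := count_lt ib lt; rewrite cb cb' ltnn.
by have := count_lt ib' gt; rewrite cb cb' ltnn.
Qed.

Lemma nthA_of b : inA b -> nthA (count inA (iota 0 b)).+1 b.
Proof. by move=> ib; split. Qed.

Lemma aurif z : (2 <= z)%N -> ~~ inA (2 * z ^ 2).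
Proof.
move=> z2; rewrite /inA negb_and; apply/orP; right.
have E : ((2 * z ^ 2) ^ 2 + 1 = (2 * z * (z - 1) + 1) * (2 * z * (z + 1) + 1))%N.
  have -> : z = (z - 2).+2 by rewrite -addn2 subnK.
  set w := (z - 2)%N; rewrite !subSS subn0 /=.
  rewrite !expnS expn0; ring.
rewrite E; apply/negP => /primeP [_ h].
have := h (2 * z * (z - 1) + 1)%N (dvdn_mulr _ (dvdnn _)).
have A2 : (2 <= 2 * z * (z - 1))%N.
  by move: z2; nia.
have B2 : (2 <= 2 * z * (z + 1) + 1)%N by move: z2; nia.
case/orP => /eqP H.
  by move: H A2; lia.
move: H B2; set A := (2 * z * (z - 1))%N; set B := (2 * z * (z + 1) + 1)%N.
rewrite -{1}[(A + 1)%N]muln1 => /eqP; rewrite eqn_pmul2l ?addn1 // => /eqP <-.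
by [].
Qed.


Lemma ex_min_prop (P : nat -> Prop) : (exists i, P i) -> exists j, P j /\ forall i, (i < j)%N -> ~ P i.
Proof.
move=> [i Pi]; elim/ltn_ind: i Pi => i IH Pi.
case: (pselect (exists i', (i' < i)%N /\ P i')) => [[i' [lt P']]|h].
  exact: IH lt P'.
by exists i; split => // i' lt P'; apply: h; exists i'.
Qed.

Lemma goodF_inA Q es m e : (0 < Q)%N -> goodF (Fs Q es) m -> e \in es -> (e < m)%N ->
  inA (Q * m - Q * e).
Proof.
move=> Q0 gm ee em; rewrite inA_eval ?ltn_pmul2l //.
move/allP: gm => /(_ (qp Q%:Z (Q%:Z * e%:Z))) /=; rewrite PoszM; apply.
by apply/mapP; exists e.
Qed.

Lemma A_unbounded : BatemanHorn -> forall M, exists a, (M <= a)%N /\ inA a.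
Proof.
move=> BH M.
have hQ : forall p, prime p -> (p <= 2 * size [:: 0%N])%N -> (p %| 2)%N.
  move=> p pp p2; have p1 := prime_gt1 pp.
  have -> : p = 2%N by move: p2 p1 => /=; lia.
  by [].
have [|m [hm [gm _]]] := @main_exists (Fs 2 [:: 0%N]) [::] BH (@Fs_BHok 2 [:: 0%N] isT isT hQ)
   (@Fs_grows 2 [:: 0%N] isT) _ M.+1.
  by [].
exists (2 * m - 2 * 0)%N; split.
  by rewrite muln0 subn0; lia.
by apply: goodF_inA gm _ _; rewrite ?mem_head //; lia.
Qed.

Lemma A_count : BatemanHorn -> forall N, exists Y, (N <= count inA (iota 0 Y))%N.
Proof.
move=> BH; elim => [|N [Y hY]]; first by exists 0%N.
have [a [Ya ia]] := A_unbounded BH Y.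
exists a.+1; apply: leq_ltn_trans (count_lt ia (ltnSn a)).
exact: leq_trans hY (count_mono Ya).
Qed.


Theorem proposition2 :
  BatemanHorn ->
  forall k : nat, (0 < k)%N ->
  forall N : nat, exists n j : nat, (N <= n)%N /\ jA n j /\ (k <= j)%N.
Proof.
move=> BH k k0 N.
set Q := (2 * k.+1)`!.
have Q0 : (0 < Q)%N by rewrite fact_gt0.
have hQ : forall p, prime p -> (p <= 2 * k.+1)%N -> (p %| Q)%N.
  by move=> p pp pk; apply: dvdn_fact; rewrite prime_gt0.
have Q2 : (2 <= Q)%N.
  apply: dvdn_leq => //; apply: hQ => //; lia.
have hQ1 : forall p, prime p -> (p <= 2 * size [:: 0%N])%N -> (p %| Q)%N.
  by move=> p pp pk; apply: hQ => //; move: pk => /=; lia.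
have [|m0 [hm0 [g0 _]]] := @main_exists (Fs Q [:: 0%N]) [::] BH (@Fs_BHok Q [:: 0%N] Q0 isT hQ1)
   (@Fs_grows Q [:: 0%N] Q0) _ (2 * Q * k ^ 2).+1.
  by [].
have iQm0 : inA (Q * m0).
  have := goodF_inA Q0 g0 (mem_head _ _) (leq_ltn_trans (leq0n _) hm0).
  by rewrite muln0 subn0.
pose D y := (Q * (2 * Q * y ^ 2))%N.
pose W := [seq (2 * Q * y ^ 2)%N | y <- iota 1 k.-1].
pose es := 0%N :: W ++ [:: m0].
pose Dmax := D k.-1.
pose DS := [seq Q * e | e <- W]%N.
pose T := [seq t <- iota 1 Dmax | t \notin DS].
pose gs := [seq qp Q%:Z t%:Z | t <- T].
have Dmono : forall y y', (D y < D y')%N = (y < y')%N.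
  move=> y y'; rewrite /D ltn_pmul2l // ltn_pmul2l; first exact: ltn_sqr. by rewrite muln_gt0 Q0.
have Dle : forall y y', (D y <= D y')%N = (y <= y')%N.
  by move=> y y'; rewrite leqNgt Dmono -leqNgt.
have Wle : forall e, e \in W -> (e <= 2 * Q * (k.-1) ^ 2)%N.
  move=> e /mapP [y]; rewrite mem_iota => /andP[y1 yk] ->.
  have hy : (y <= k.-1)%N by move: yk k0; lia.
  by rewrite leq_mul2l leq_exp2r // hy orbT.
have Wpos : forall e, e \in W -> (0 < e)%N.
  move=> e /mapP [y]; rewrite mem_iota => /andP[y1 yk] ->.
  have Q20 : (0 < 2 * Q)%N by rewrite muln_gt0 Q0.
  by rewrite muln_gt0 Q20 expn_gt0 y1.
have Wm0 : (2 * Q * (k.-1) ^ 2 < m0)%N.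
  apply: leq_ltn_trans hm0; have hk : (k.-1 <= k)%N by lia.
  by rewrite leq_mul2l leq_exp2r // hk orbT.
have ues : uniq es.
  rewrite /es cons_uniq cat_uniq /= andbT; apply/and3P; split.
  - rewrite mem_cat negb_or; apply/andP; split.
      by apply/negP => /Wpos.
    by rewrite inE; apply/eqP => m00; move: Wm0; rewrite -m00.
  - rewrite map_inj_in_uniq ?iota_uniq // => y y' _ _ /eqP.
    have Q20 : (0 < 2 * Q)%N by rewrite muln_gt0 Q0.
    by rewrite eqn_pmul2l // eqn_exp2r // => /eqP.
  - rewrite orbF; apply/negP => /Wle; rewrite leqNgt Wm0 //.
have ses : size es = k.+1.
  by rewrite /es /= size_cat size_map size_iota /= addn1 prednK.
have hFs := @Fs_BHok Q es Q0 ues (ltac:(by rewrite ses)).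
have hgr := @Fs_grows Q es Q0.
have hgs : forall g, g \in gs -> gok (Fs Q es) g.
  move=> g /mapP [t]; rewrite mem_filter mem_iota => /andP[tDS /andP[t1 tD]] ->.
  apply: gok_qp => // e; rewrite /es in_cons mem_cat => /orP[/eqP ->|/orP[eW|]].
  - by rewrite muln0; move: t1; lia.
  - by apply: contra tDS => /eqP ->; apply/mapP; exists e.
  - rewrite inE => /eqP ->; rewrite neq_ltn; apply/orP; left.
    apply: (leq_trans (_ : t < Dmax.+1)%N); first by move: tD; lia.
    by rewrite /Dmax /D ltn_pmul2l.
have [Y hY] := A_count BH (maxn N 2).
have [m [hm [gm hgsm]]] := main_exists BH hFs hgr hgs (m0 + Y).+1.
set a := (Q * m)%N.
have m0m : (m0 < m)%N by lia.
have Ym : (Y <= a)%N.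
  apply: (leq_trans (_ : Y <= m)%N); first by lia.
  by rewrite /a leq_pmull.
have m0pos : (0 < m0)%N by lia.
have eW : forall y, (1 <= y <= k.-1)%N -> (2 * Q * y ^ 2)%N \in W.
  by move=> y hy; apply/mapP; exists y => //; rewrite mem_iota; lia.
have ees : forall e, e \in W -> e \in es.
  by move=> e eW'; rewrite /es in_cons mem_cat eW' orbT.
have F1 : inA a.
  have := goodF_inA Q0 gm (mem_head _ _) (leq_ltn_trans (leq0n _) m0m).
  by rewrite muln0 subn0.
have F2 : forall y, (1 <= y <= k.-1)%N -> inA (a - D y).
  move=> y hy; apply: goodF_inA Q0 gm (ees _ (eW y hy)) _.
  apply: leq_ltn_trans (Wle _ (eW y hy)) (ltn_trans Wm0 m0m).
have F3 : inA (a - Q * m0).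
  apply: goodF_inA Q0 gm _ m0m.
  by rewrite /es in_cons mem_cat mem_seq1 eqxx !orbT.
have Dmax_lt : (Dmax < Q * m0)%N by rewrite /Dmax /D ltn_pmul2l.
have Qm0a : (Q * m0 < a)%N by rewrite /a ltn_pmul2l.
have F4 : forall t, (1 <= t <= Dmax)%N -> t \notin DS -> ~~ inA (a - t).
  move=> t ht tDS.
  have tT : t \in T by rewrite mem_filter tDS mem_iota; lia.
  have := allP hgsm (qp Q%:Z t%:Z) (map_f _ tT).
  rewrite /a inA_eval //; lia.
have DSiff : forall t, t \in DS -> exists y, (1 <= y <= k.-1)%N /\ t = D y.
  move=> t /mapP [e /mapP [y]]; rewrite mem_iota => hy -> ->.
  by exists y; split => //; lia.
have F6 : forall y, (1 <= y)%N -> ~~ inA (D y).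
  move=> y y1; have -> : D y = (2 * (Q * y) ^ 2)%N by rewrite /D expnMn; ring.
  by apply: aurif; apply: leq_trans Q2 (leq_pmulr _ y1).
have D0 : D 0%N = 0%N by rewrite /D muln0 muln0.
have Da : forall y, (y <= k.-1)%N -> (D y < a)%N.
  move=> y hy; apply: leq_ltn_trans Qm0a; apply: ltnW; apply: leq_ltn_trans Dmax_lt.
  by rewrite /Dmax Dle.
have CW : forall y, (y <= k.-1)%N -> (count inA (iota 0 (a - D y)) + y = count inA (iota 0 a))%N.
  elim => [|y IH] hy; first by rewrite D0 subn0 addn0.
  have hy' : (y <= k.-1)%N by lia.
  have Dlt : (D y < D y.+1)%N by rewrite Dmono.
  have Da1 := Da _ hy.
  rewrite -(IH hy') (@count_step (a - D y.+1) (a - D y)) ?addnS ?addSn //.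
  - by apply: F2; lia.
  - move=> z /andP[xz zy].
    have za : (z <= a)%N by lia.
    have -> : z = (a - (a - z))%N by rewrite subKn.
    apply: F4.
      have : (D y.+1 <= D k.-1)%N by rewrite Dle.
      rewrite /Dmax; lia.
    apply/negP => /DSiff [y' [hy'' e]].
    have h1 : (D y < D y')%N by rewrite -e; lia.
    have h2 : (D y' < D y.+1)%N by rewrite -e; lia.
    by move: h1 h2; rewrite !Dmono; lia.
  - lia.
set n := (count inA (iota 0 a)).+1.
have nA : nthA n a by apply: nthA_of.
have cY := count_mono Ym.
have nN : (N <= n)%N by move: hY cY; rewrite /n; lia.
have n2 : (2 <= n)%N by move: hY cY; rewrite /n; lia.
have nthy : forall y, (1 <= y <= k.-1)%N -> nthA (n - y) (a - D y).
  move=> y hy; have := CW y (ltac:(lia)); rewrite /n => hc.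
  split; first by lia.
  split; first by apply: F2.
  lia.
set bs := (a - Q * m0)%N.
have hcb : (count inA (iota 0 bs) < count inA (iota 0 a))%N.
  apply: count_lt F3 _; rewrite /bs; have : (0 < Q * m0)%N by rewrite muln_gt0 Q0.
  lia.
pose P := fun i => (1 <= i <= n.-1)%N /\ exists b, nthA (n - i) b /\ inA (a - b).
have Pi0 : P (n - (count inA (iota 0 bs)).+1)%N.
  split; first by rewrite /n; lia.
  exists bs; split.
    have -> : (n - (n - (count inA (iota 0 bs)).+1) = (count inA (iota 0 bs)).+1)%N.
      by rewrite /n; lia.
    exact: nthA_of F3.
  by rewrite /bs subKn // ltnW.
have [j [[hj [b [nb iab]]] jmin]] := ex_min_prop (ex_intro _ _ Pi0).
exists n, j; split => //; split.
  split => //; exists a; split => //; split => //; split.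
    by exists b.
  move=> i /andP[i1 ij] b' nb'; apply/negP => iab'.
  apply: (jmin i ij); split; last by exists b'.
  by move: hj; lia.
rewrite leqNgt; apply/negP => jk.
have hjk : (1 <= j <= k.-1)%N by move: hj jk; lia.
have eb := nthA_uniq nb (nthy j hjk).
move: iab; rewrite eb subKn; last by apply: ltnW; apply: Da; lia.
by apply/negP; apply: F6; lia.
Qed.
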